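(* Let a group $G$ act freely on a topological space $X$ and let $p:X\to X/G$ be the projection onto the orbit space (quotient topology). Suppose $X/G$ has an open cover $\mathcal U$ consisting of connected sets such that for every pair $U,V\in\mathcal U$ the union $U\cup V$ is evenly covered by $p$. Then the action is an overlay action.
   Context: An open set $W\subseteq Y$ is evenly covered by $p:X\to Y$ if $p^{-1}(W)$ is a disjoint union of open sets each mapped homeomorphically onto $W$ by $p$. For a continuous map $p:X\to Y$: a slice of $p$ is an open set $U\subseteq X$ such that $p^{-1}(p(U))$ is the disjoint union of a family of open sets $U_s$ ($s\in S$), each mapped by $p$ homeomorphically onto $p(U)$, with $U=U_t$ for some $t\in S$. A covering structure of $p$ is an open cover $\mathcal S$ of $X$ by slices of $p$ such that for every $U\in\mathcal S$, $p^{-1}(p(U))$ is the disjoint union of a family $\{U_j\}_{j\in J}$ of elements of $\mathcal S$, each mapped homeomorphically onto $p(U)$. For a cover $\mathcal S$ and $x\in X$, $st(x,\mathcal S)=\bigcup\{U\in\mathcal S: x\in U\}$. For a free action of $G$ on $X$: a slice of the action is an open $U\subseteq X$ with $U\cap(g\cdot U)\neq\emptyset\Rightarrow g=1_G$. The action is an overlay action if there is a covering structure $\mathcal U$ of the projection $X\to X/G$ such that $st(x,\mathcal U)$ is a slice of the action for every $x\in X$. *)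

(* Defs.v *)
Set Implicit Arguments.
Unset Strict Implicit.

Record topology (T : Type) := Topology {
  open : (T -> Prop) -> Prop;
  open_full : open (fun _ => True);
  open_union : forall (I : Type) (F : I -> T -> Prop),
      (forall i, open (F i)) -> open (fun x => exists i, F i x);
  open_inter : forall A B, open A -> open B -> open (fun x => A x /\ B x)
}.
Arguments open {T} t _.

Record group := Group {
  gcar :> Type;
  gmul : gcar -> gcar -> gcar;
  gone : gcar;
  ginv : gcar -> gcar;
  gmulA : forall a b c, gmul a (gmul b c) = gmul (gmul a b) c;
  gmul1l : forall a, gmul gone a = a;
  gmul1r : forall a, gmul a gone = a;
  gmulVl : forall a, gmul (ginv a) a = gone;
  gmulVr : forall a, gmul a (ginv a) = gone
}.

Section Defs.
Variables (G : group) (X Y : Type) (TX : topology X) (TY : topology Y).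
Variable (act : G -> X -> X).
Variable (p : X -> Y).

(** [act] is a (left) action of [G] on the space [X]: each [act g] is
    continuous (hence a homeomorphism, with inverse [act (ginv g)]). *)
Definition is_action : Prop :=
  (forall x, act (gone G) x = x) /\
  (forall g h x, act (gmul g h) x = act g (act h x)) /\
  (forall g A, open TX A -> open TX (fun x => A (act g x))).

Definition free_action : Prop := forall g x, act g x = x -> g = gone G.

(** [p : X -> Y] is (up to the canonical homeomorphism) the projection onto
    the orbit space X/G equipped with the quotient topology. *)
Definition is_orbit_projection : Prop :=
  (forall y, exists x, p x = y) /\
  (forall x1 x2, p x1 = p x2 <-> exists g, act g x1 = x2) /\
  (forall V, open TY V <-> open TX (fun x => V (p x))).

Definition image (U : X -> Prop) : Y -> Prop := fun y => exists x, U x /\ p x = y.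

(** [p] maps [U] homeomorphically onto [W] (subspace topologies). *)
Definition maps_homeo_onto (U : X -> Prop) (W : Y -> Prop) : Prop :=
  (forall x, U x -> W (p x)) /\
  (forall y, W y -> exists x, U x /\ p x = y) /\
  (forall x1 x2, U x1 -> U x2 -> p x1 = p x2 -> x1 = x2) /\
  (forall B, open TY B -> exists A, open TX A /\ forall x, U x -> (A x <-> B (p x))) /\
  (forall A, open TX A -> exists B, open TY B /\
      forall y, W y -> (B y <-> exists x, U x /\ A x /\ p x = y)).

Definition disjoint_decomp (W : Y -> Prop) (S : Type) (F : S -> X -> Prop) : Prop :=
  (forall s, open TX (F s)) /\
  (forall s t x, F s x -> F t x -> s = t) /\
  (forall x, W (p x) <-> exists s, F s x) /\
  (forall s, maps_homeo_onto (F s) W).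

Definition evenly_covered (W : Y -> Prop) : Prop :=
  open TY W /\ exists (S : Type) (F : S -> X -> Prop), disjoint_decomp W F.

Definition slice_of_map (U : X -> Prop) : Prop :=
  open TX U /\ exists (S : Type) (F : S -> X -> Prop),
    disjoint_decomp (image U) F /\ exists t, forall x, F t x <-> U x.

Definition covering_structure (C : (X -> Prop) -> Prop) : Prop :=
  (forall x, exists U, C U /\ U x) /\
  (forall U, C U -> slice_of_map U) /\
  (forall U, C U -> exists (J : Type) (F : J -> X -> Prop),
      (forall j, C (F j)) /\ disjoint_decomp (image U) F).

Definition star (x : X) (C : (X -> Prop) -> Prop) : X -> Prop :=
  fun z => exists U, C U /\ U x /\ U z.

Definition slice_of_action (U : X -> Prop) : Prop :=
  open TX U /\ forall g, (exists x, U x /\ U (act g x)) -> g = gone G.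

Definition overlay_action : Prop :=
  exists C, covering_structure C /\ forall x, slice_of_action (star x C).

End Defs.

Definition connected (Y : Type) (TY : topology Y) (U : Y -> Prop) : Prop :=
  forall A B, open TY A -> open TY B ->
    (forall y, U y -> A y \/ B y) ->
    (forall y, U y -> A y -> B y -> False) ->
    (forall y, U y -> A y) \/ (forall y, U y -> B y).

(* Main.v *)
Require Import Defs.
From Stdlib Require Import Classical FunctionalExtensionality PropExtensionality.

Lemma pred_ext {T : Type} (A B : T -> Prop) : (forall y, A y <-> B y) -> A = B.
Proof.
  intros H; apply functional_extensionality; intros y; apply propositional_extensionality; auto.
Qed.

Section Helpers.
Variables (X Y : Type) (TX : topology X) (TY : topology Y) (p : X -> Y).

Lemma homeo_conn (U : X -> Prop) (W : Y -> Prop) :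
  maps_homeo_onto TX TY p U W -> connected TY W ->
  forall A B, open TX A -> open TX B ->
  (forall x, U x -> A x \/ B x) -> (forall x, U x -> A x -> B x -> False) ->
  (forall x, U x -> A x) \/ (forall x, U x -> B x).
Proof.
  intros [H1 [H2 [H3 [H4 H5]]]] Hc A B HA HB Hcv Hd.
  destruct (H5 A HA) as [A' [HA' EA]]. destruct (H5 B HB) as [B' [HB' EB]].
  destruct (Hc A' B' HA' HB') as [L|L].
  - intros y Wy. destruct (H2 y Wy) as [x [Ux <-]].
    destruct (Hcv x Ux); [left; apply EA|right; apply EB]; eauto.
  - intros y Wy HAy HBy. apply EA in HAy; auto. apply EB in HBy; auto.
    destruct HAy as [x1 [U1 [A1 E1]]]. destruct HBy as [x2 [U2 [B2 E2]]].
    assert (x1 = x2) by (apply H3; congruence). subst. eauto.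
  - left. intros x Ux. pose proof (L (p x) (H1 x Ux)) as Lx.
    apply EA in Lx; [|auto]. destruct Lx as [x' [U' [A'' E']]].
    rewrite <- (H3 x' x U' Ux E'). auto.
  - right. intros x Ux. pose proof (L (p x) (H1 x Ux)) as Lx.
    apply EB in Lx; [|auto]. destruct Lx as [x' [U' [A'' E']]].
    rewrite <- (H3 x' x U' Ux E'). auto.
Qed.

Lemma in_sheet (W' : Y -> Prop) (S : Type) (F : S -> X -> Prop) (U : X -> Prop)
  (W : Y -> Prop) (s : S) (x0 : X) :
  maps_homeo_onto TX TY p U W -> connected TY W -> disjoint_decomp TX TY p W' F ->
  (forall x, U x -> W' (p x)) -> U x0 -> F s x0 -> forall x, U x -> F s x.
Proof.
  intros Hh Hc [Fo [Fd [Fc Fh]]] HUW Ux0 Fx0.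
  set (B := fun x => exists i : {t | t <> s}, F (proj1_sig i) x).
  assert (HB: open TX B) by (apply open_union; intros; apply Fo).
  destruct (homeo_conn U W Hh Hc (F s) B (Fo s) HB) as [L|L].
  - intros x Ux. destruct (proj1 (Fc x) (HUW x Ux)) as [t Ft].
    destruct (classic (t = s)) as [->|n]; [left; auto|right; exists (exist _ t n); auto].
  - intros x Ux Fs [[t n] Ft]. apply n. simpl in Ft. eapply Fd; eauto.
  - exact L.
  - exfalso. destruct (L x0 Ux0) as [[t n] Ft]. apply n. eapply Fd; eauto.
Qed.

End Helpers.

Theorem proposition3p4 (G : group) (X Y : Type) (TX : topology X) (TY : topology Y)
    (act : G -> X -> X) (p : X -> Y)
    (Hact : is_action TX act) (Hfree : free_action act)
    (Hp : is_orbit_projection TX TY act p)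
    (Ucov : (Y -> Prop) -> Prop)
    (Hcov : forall y, exists U, Ucov U /\ U y)
    (Hopen : forall U, Ucov U -> open TY U)
    (Hconn : forall U, Ucov U -> connected TY U)
    (Hev : forall U V, Ucov U -> Ucov V ->
        evenly_covered TX TY p (fun y => U y \/ V y)) :
  overlay_action TX TY act p.
Proof.
  destruct Hp as [_ [Horb _]].
  assert (evW : forall W, Ucov W -> exists (S : Type) (F : S -> X -> Prop),
             disjoint_decomp TX TY p W F).
  { intros W HW. destruct (Hev W W HW HW) as [_ [S [F D]]].
    assert (E : (fun y => W y \/ W y) = W) by (apply pred_ext; tauto).
    rewrite E in D. eauto. }
  set (C := fun U => exists W, Ucov W /\ (exists x, U x) /\ open TX U /\
                                maps_homeo_onto TX TY p U W).
  assert (imgE : forall U W, maps_homeo_onto TX TY p U W -> image p U = W).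
  { intros U W [H1 [H2 _]]. apply pred_ext. intros y; split.
    - intros [x [Ux <-]]. auto.
    - intros Wy. destruct (H2 y Wy) as [x [Ux Ex]]. exists x; auto. }
  assert (sheet : forall U W S (F : S -> X -> Prop), Ucov W -> (exists x, U x) ->
             maps_homeo_onto TX TY p U W -> disjoint_decomp TX TY p W F ->
             exists s, forall x, F s x <-> U x).
  { intros U W S F HW [x0 Ux0] Hh D.
    pose proof D as [Fo [Fd [Fc Fh]]].
    pose proof Hh as [H1 [H2 _]].
    destruct (proj1 (Fc x0) (H1 x0 Ux0)) as [s Fs].
    exists s. intros x; split.
    - intros Fx. destruct (H2 (p x) (proj2 (Fc x) (ex_intro _ s Fx))) as [u [Uu Eu]].
      destruct (Fh s) as [_ [_ [Hi _]]].
      assert (Fsu : F s u) by (apply (in_sheet _ _ TX TY p W S F U W s x0); auto).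
      rewrite <- (Hi u x Fsu Fx Eu). auto.
    - intros Ux. apply (in_sheet _ _ TX TY p W S F U W s x0); auto. }
  exists C. split; [split; [|split]|].
  - intros x. destruct (Hcov (p x)) as [W [HW Wx]].
    destruct (evW W HW) as [S [F D]]. pose proof D as [Fo [Fd [Fc Fh]]].
    destruct (proj1 (Fc x) Wx) as [s Fs].
    exists (F s). split; [|auto]. exists W. split; [auto|split; [eauto|split; [apply Fo|apply Fh]]].
  - intros U [W [HW [Hne [Uo Hh]]]]. split; [auto|].
    rewrite (imgE U W Hh). destruct (evW W HW) as [S [F D]].
    destruct (sheet U W S F HW Hne Hh D) as [s Hs]. exists S, F. split; eauto.
  - intros U [W [HW [[x0 Ux0] [Uo Hh]]]].
    rewrite (imgE U W Hh). destruct (evW W HW) as [S [F D]].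
    exists S, F. split; [|auto].
    pose proof D as [Fo [Fd [Fc Fh]]].
    intros j. exists W. split; [auto|]. split; [|split; [apply Fo|apply Fh]].
    destruct (Fh j) as [_ [H2 _]]. destruct Hh as [H1 _].
    destruct (H2 (p x0) (H1 x0 Ux0)) as [u [Fu _]]. eauto.
  - intros x. split.
    + assert (E : star x C = fun z => exists i : {U | C U /\ U x}, proj1_sig i z).
      { apply pred_ext. intros z; split.
        - intros [U [CU [Ux Uz]]]. exists (exist _ U (conj CU Ux)). auto.
        - intros [[U [CU Ux]] Uz]. exists U. auto. }
      rewrite E. apply open_union. intros i. destruct i as [U [[W [HW0 [Hn0 [Uo Hh0]]]] Ux0]]. exact Uo.
    + intros g [z [[U1 [[W1 [HW1 [_ [_ Hh1]]]] [U1x U1z]]]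
                  [U2 [[W2 [HW2 [_ [_ Hh2]]]] [U2x U2z]]]]].
      destruct (Hev W1 W2 HW1 HW2) as [_ [S [F D]]].
      pose proof D as [Fo [Fd [Fc Fh]]].
      pose proof Hh1 as [H11 _]. pose proof Hh2 as [H21 _].
      destruct (proj1 (Fc x) (or_introl (H11 x U1x))) as [s Fs].
      assert (F1 : F s z).
      { apply (in_sheet _ _ TX TY p (fun y => W1 y \/ W2 y) S F U1 W1 s x); auto. }
      assert (F2 : F s (act g z)).
      { apply (in_sheet _ _ TX TY p (fun y => W1 y \/ W2 y) S F U2 W2 s x); auto. }
      destruct (Fh s) as [_ [_ [Hi _]]].
      apply Hfree with z. symmetry.
      apply Hi; auto. apply Horb. exists g. reflexivity.
Qed.
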